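(* Let $q_1,q_2$ be coprime positive integers, $Q=q_1q_2$, let $V:\mathbb{Z}^2\to\mathbb{R}$ be $(q_1,q_2)$-periodic, and let $\lambda_*\in\mathbb{C}$. Let $N\subset\mathbb{R}^2$ be the quadrilateral with vertices $(q_2,0)$, $(0,q_1)$, $(-q_2,0)$, $(0,-q_1)$. Then $N$ contains every exponent vector of the Laurent polynomial $z_1\frac{\partial}{\partial z_1}\mathcal{P}(z,\lambda_* )$.
   Context: $V$ is $(q_1,q_2)$-periodic if $V(n_1,n_2)=V(n_1+q_1,n_2)=V(n_1,n_2+q_2)$ for all $(n_1,n_2)\in\mathbb{Z}^2$. The operator $\Delta+V$ acts on $u:\mathbb{Z}^2\to\mathbb{C}$ by $((\Delta+V)u)(n)=u(n_1+1,n_2)+u(n_1-1,n_2)+u(n_1,n_2+1)+u(n_1,n_2-1)+V(n)u(n)$. For $z=(z_1,z_2)\in(\mathbb{C}\setminus\{0\})^2$, $\mathcal{D}_V(z)$ is the $Q\times Q$ matrix of $\Delta+V$ acting on the space of functions $u$ with $u(n_1+q_1,n_2)=z_1u(n)$ and $u(n_1,n_2+q_2)=z_2u(n)$ for all $n$, in the coordinates $\{u(n_1,n_2):1\le n_1\le q_1,1\le n_2\le q_2\}$, and $\mathcal{P}(z,\lambda)=\det(\mathcal{D}_V(z)-\lambda I)$, a Laurent polynomial in $z$. An exponent vector of a Laurent polynomial $\sum_i c_iz^{e_i}$ is an $e_i\in\mathbb{Z}^2$ with $c_i\neq 0$. *)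

(* Defs.v *)
From HB Require Import structures.
From mathcomp Require Import all_boot all_order all_algebra.
From mathcomp Require Import complex.
From mathcomp Require Import reals.
Set Implicit Arguments. Unset Strict Implicit. Unset Printing Implicit Defensive.
Import Order.TTheory GRing.Theory Num.Theory.
Local Open Scope ring_scope.
Local Open Scope complex_scope.

(* A point of the fundamental domain {1..q1} x {1..q2} is encoded by
   k : 'I_(q1*q2) with n1 = k %/ q2 + 1 and n2 = k %% q2 + 1.
   Bivariate polynomials in z1, z2 are elements of {poly {poly C}}:
   the outer variable is z1 ('X), the inner one is z2 ('X%:P);
   p`_i`_j is the coefficient of z1^i z2^j. *)

Section Floquet.
Variable R : realType.
Local Notation C := (R[i]).
Variables (q1 q2 : nat) (V : int -> int -> R) (lam : C).

Definition crd1 (k : nat) : nat := (k %/ q2)%N.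
Definition crd2 (k : nat) : nat := (k %% q2)%N.

Definition pz1 : {poly {poly C}} := 'X.
Definition pz2 : {poly {poly C}} := ('X)%:P.
Definition pcst (c : C) : {poly {poly C}} := c%:P%:P.

(* Entry (k,l) of  z1 z2 (D_V(z) - lam I), which has polynomial entries. *)
Definition scaled_entry (k l : 'I_(q1 * q2)) : {poly {poly C}} :=
  let a := crd1 k in let b := crd2 k in
  let a' := crd1 l in let b' := crd2 l in
  (if k == l then pcst ((V (Posz a.+1) (Posz b.+1))%:C - lam) * pz1 * pz2 else 0)
  + (if (b' == b) && (a' == (a.+1 %% q1)%N)
     then (if a.+1 == q1 then pz1 * pz1 * pz2 else pz1 * pz2) else 0)
  + (if (b' == b) && (a' == ((a + q1).-1 %% q1)%N)
     then (if a == 0%N then pz2 else pz1 * pz2) else 0)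
  + (if (a' == a) && (b' == (b.+1 %% q2)%N)
     then (if b.+1 == q2 then pz1 * pz2 * pz2 else pz1 * pz2) else 0)
  + (if (a' == a) && (b' == ((b + q2).-1 %% q2)%N)
     then (if b == 0%N then pz1 else pz1 * pz2) else 0).

Definition scaled_mx : 'M[{poly {poly C}}]_(q1 * q2) :=
  \matrix_(k, l) scaled_entry k l.

(* (z1 z2)^Q * P(z, lam) as an honest polynomial in z1, z2. *)
Definition shiftedP : {poly {poly C}} := \det scaled_mx.

Definition Pcoef (e1 e2 : int) : C :=
  let Q := (q1 * q2)%N in
  if (0 <= e1 + Q%:Z) && (0 <= e2 + Q%:Z)
  then (shiftedP)`_(absz (e1 + Q%:Z))`_(absz (e2 + Q%:Z))
  else 0.

Definition z1dPcoef (e1 e2 : int) : C := e1%:~R * Pcoef e1 e2.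

End Floquet.

Definition periodic (q1 q2 : nat) (R : Type) (V : int -> int -> R) : Prop :=
  forall n1 n2 : int, V n1 n2 = V (n1 + q1%:Z)%R n2 /\ V n1 n2 = V n1 (n2 + q2%:Z)%R.

(* Exponent vector e lies in the quadrilateral with vertices
   (q2,0),(0,q1),(-q2,0),(0,-q1), i.e. |e1|/q2 + |e2|/q1 <= 1. *)
Definition in_N (q1 q2 : nat) (e1 e2 : int) : Prop :=
  (q1 * `|e1| + q2 * `|e2| <= q1 * q2)%N.

(* Main.v *)
Require Import Defs.
From HB Require Import structures.
From mathcomp Require Import all_boot all_order all_algebra.
From mathcomp Require Import complex reals.
From mathcomp Require Import perm zify ring lra.
Set Implicit Arguments. Unset Strict Implicit.
Import Order.TTheory GRing.Theory Num.Theory.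
Local Open Scope ring_scope.

Section WB.
Variable K : nzRingType.
Definition wb (a b B : int) (p : {poly {poly K}}) :=
  forall i j : nat, p`_i`_j != 0 -> a * i%:Z + b * j%:Z <= B.

Lemma wb0 a b B : wb a b B 0.
Proof. by move=> i j; rewrite !coef0 eqxx. Qed.

Lemma wbW a b B B' p : B <= B' -> wb a b B p -> wb a b B' p.
Proof. by move=> hB hp i j /hp h; apply: le_trans hB. Qed.

Lemma wbD a b B p q : wb a b B p -> wb a b B q -> wb a b B (p + q).
Proof.
move=> hp hq i j; rewrite !coefD.
have [/hp //|/negbNE/eqP ->] := boolP (p`_i`_j != 0).
by rewrite add0r => /hq.
Qed.

Lemma wbN a b B p : wb a b B p -> wb a b B (- p).
Proof. by move=> hp i j; rewrite !coefN oppr_eq0 => /hp. Qed.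

Lemma sum_neq0 (M : zmodType) n (F : 'I_n -> M) :
  \sum_(k < n) F k != 0 -> exists k, F k != 0.
Proof.
case: (pickP (fun k => F k != 0)) => [k Hk|H0]; first by exists k.
by rewrite big1 ?eqxx // => k _; move/negbFE: (H0 k) => /eqP.
Qed.

Lemma wbM a b B1 B2 p q : wb a b B1 p -> wb a b B2 q -> wb a b (B1 + B2) (p * q).
Proof.
move=> hp hq i j; rewrite coefM coef_sum => /sum_neq0 [k].
rewrite coefM => /sum_neq0 [m].
have [/eqP pz|pnz] := boolP (p`_k`_m == 0); first by rewrite pz mul0r eqxx.
have [/eqP qz|qnz] := boolP (q`_(i - k)`_(j - m) == 0); first by rewrite qz mulr0 eqxx.
move=> _; have h1 := hp _ _ pnz; have h2 := hq _ _ qnz.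
have hk := ltn_ord k; have hm := ltn_ord m.
have ek : ((i - k)%N%:Z = i%:Z - k%:Z) by rewrite subzn // -ltnS.
have em : ((j - m)%N%:Z = j%:Z - m%:Z) by rewrite subzn // -ltnS.
rewrite ek em in h2.
have -> : a * i%:Z + b * j%:Z = (a * k%:Z + b * m%:Z) + (a * (i%:Z - k%:Z) + b * (j%:Z - m%:Z)) by ring.
exact: lerD.
Qed.

Lemma wb1 a b : wb a b 0 1.
Proof.
move=> i j; rewrite coef1; case: (i =P 0)%N => [->|]; last by rewrite coef0 eqxx.
by rewrite coef1; case: (j =P 0)%N => [->|]; rewrite ?eqxx // mulr0 mulr0 addr0.
Qed.

Lemma wbC a b (c : K) : wb a b 0 (c%:P%:P).
Proof.
move=> i j; rewrite coefC; case: (i =P 0)%N => [->|]; last by rewrite coef0 eqxx.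
by rewrite coefC; case: (j =P 0)%N => [->|]; rewrite ?eqxx // mulr0 mulr0 addr0.
Qed.

Lemma wbX a b : wb a b a 'X.
Proof.
move=> i j; rewrite coefX; case: (i =P 1)%N => [->|]; last by rewrite coef0 eqxx.
by rewrite coef1; case: (j =P 0)%N => [->|]; rewrite ?eqxx // mulr0 mulr1 addr0.
Qed.

Lemma wbY a b : wb a b b ('X%:P).
Proof.
move=> i j; rewrite coefC; case: (i =P 0)%N => [->|]; last by rewrite coef0 eqxx.
by rewrite coefX; case: (j =P 1)%N => [->|]; rewrite ?eqxx // mulr0 mulr1 add0r.
Qed.

Lemma wb_prod a b (I : eqType) (r : seq I) (Bf : I -> int) (F : I -> {poly {poly K}}) :
  (forall x, wb a b (Bf x) (F x)) ->
  wb a b (\sum_(x <- r) Bf x) (\prod_(x <- r) F x).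
Proof.
move=> h; elim: r => [|x r IH]; first by rewrite !big_nil; apply: wb1.
by rewrite !big_cons; apply: wbM.
Qed.

Lemma wb_det a b n (A : 'M[{poly {poly K}}]_n) (phi : 'I_n -> int) c :
  (forall k l, wb a b (c + phi l - phi k) (A k l)) -> wb a b (c *+ n) (\det A).
Proof.
move=> h; rewrite /determinant.
apply: (big_ind (wb a b (c *+ n))); [exact: wb0 | exact: wbD |].
move=> s _.
have hs : wb a b (c *+ n) (\prod_i A i (s i)).
  have := @wb_prod a b _ (index_enum 'I_n) (fun i => c + phi (s i) - phi i) (fun i => A i (s i)) (fun i => h i (s i)).
  congr wb.
  rewrite big_split /= big_split /= sumr_const card_ord sumrN.
  have -> : \sum_(i < n) phi (s i) = \sum_(i < n) phi i.
    by rewrite [RHS](reindex_inj (@perm_inj _ s)).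
  by rewrite addrK.
case: (odd_perm s); rewrite ?expr1 ?expr0 ?mulN1r ?mul1r //; exact: wbN.
Qed.
End WB.

Unset Implicit Arguments.
Set Strict Implicit.

Lemma L1 a q : (a < q)%N -> (a.+1 %% q = if a.+1 == q then 0 else a.+1)%N.
Proof.
move=> h; case: eqP => [->|ne]; first by rewrite modnn.
by rewrite modn_small // ltn_neqAle; apply/andP; split; [apply/eqP|].
Qed.

Lemma L2 a q : (a < q)%N -> ((a + q).-1 %% q = if a == 0%N then q.-1 else a.-1)%N.
Proof.
move=> h; case: eqP => [->|ne].
  by rewrite add0n modn_small //; lia.
have -> : ((a + q).-1 = a.-1 + q)%N by lia.
by rewrite modnDr modn_small //; lia.
Qed.

Section Entry.
Variable R : realType.
Variables (q1 q2 : nat) (V : int -> int -> R) (lam : R[i]%C).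
Hypothesis hq1 : (0 < q1)%N.
Hypothesis hq2 : (0 < q2)%N.
Variables s1 s2 : int.
Hypothesis hs1 : (s1 == 1) || (s1 == -1).
Hypothesis hs2 : (s2 == 1) || (s2 == -1).

Definition phi (k : 'I_(q1 * q2)) : int := - (s1 * (crd1 q2 k)%:Z + s2 * (crd2 q2 k)%:Z).
Definition al : int := s1 * q1%:Z.
Definition be : int := s2 * q2%:Z.

Lemma crd1_lt (k : 'I_(q1 * q2)) : (crd1 q2 k < q1)%N.
Proof. by rewrite /crd1 ltn_divLR // mulnC. Qed.
Lemma crd2_lt (k : 'I_(q1 * q2)) : (crd2 q2 k < q2)%N.
Proof. by rewrite /crd2 ltn_pmod. Qed.

Lemma entry_wb k l :
  wb al be ((al + be + 1) + phi l - phi k) (scaled_entry V lam k l).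
Proof.
have ha := crd1_lt k; have ha' := crd1_lt l.
have hb := crd2_lt k; have hb' := crd2_lt l.
rewrite /scaled_entry /phi /al /be /pcst /pz1 /pz2.
apply: wbD; [apply: wbD; [apply: wbD; [apply: wbD|]|]|].
  case: eqP => [->|_]; last exact: wb0.
  eapply wbW; last first. apply: wbM; [apply: wbM; [apply: wbC|apply: wbX]|apply: wbY]. lia.
all: rewrite ?(L1 _ _ ha) ?(L2 _ _ ha) ?(L1 _ _ hb) ?(L2 _ _ hb).
all: move: ha ha' hb hb'.
all: set a := crd1 q2 k; set a' := crd1 q2 l; set b := crd2 q2 k; set b' := crd2 q2 l.
all: move=> ha ha' hb hb'.
all: case/orP: hs1 => /eqP -> ; case/orP: hs2 => /eqP ->.
all: case: ifP => [/andP[/eqP E1 /eqP E2]|_]; last exact: wb0.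
all: move: E1 E2; case: eqP => h E1 E2.
all: eapply wbW; last first; [repeat (first [apply: wbM | apply: wbX | apply: wbY]) | ].
all: try lia.
Qed.

Lemma shifted_wb : wb al be ((al + be + 1) *+ (q1 * q2)) (shiftedP q1 q2 V lam).
Proof.
apply: (wb_det (phi := phi)) => k l; rewrite mxE; exact: entry_wb.
Qed.
End Entry.

Theorem corollary4p5 (R : realType) (q1 q2 : nat) (hq1 : (0 < q1)%N) (hq2 : (0 < q2)%N)
  (hcop : coprime q1 q2) (V : int -> int -> R) (hV : periodic q1 q2 V)
  (lam : R[i]%C) (e1 e2 : int) :
  z1dPcoef q1 q2 V lam e1 e2 != 0 -> in_N q1 q2 e1 e2.
Proof.
move=> h.
have hP : Pcoef q1 q2 V lam e1 e2 != 0.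
  by apply/negP => /eqP H; move: h; rewrite /z1dPcoef H mulr0 eqxx.
move: hP; rewrite /Pcoef; case: ifP => [/andP[h1 h2]|]; last by rewrite eqxx.
move=> hc.
have E1 : (absz (e1 + (q1 * q2)%N%:Z))%:Z = e1 + (q1 * q2)%N%:Z by rewrite gez0_abs.
have E2 : (absz (e2 + (q1 * q2)%N%:Z))%:Z = e2 + (q1 * q2)%N%:Z by rewrite gez0_abs.
have w := fun s1 s2 hs1 hs2 => @shifted_wb R q1 q2 V lam hq1 hq2 s1 s2 hs1 hs2 _ _ hc.
have w1 := w 1 1 isT isT; have w2 := w 1 (-1) isT isT.
have w3 := w (-1) 1 isT isT; have w4 := w (-1) (-1) isT isT.
rewrite /al /be E1 E2 in w1 w2 w3 w4.
rewrite /in_N.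
lia.
Qed.
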